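(* Let $M=(r,q,u)$ be a floor-randomized mechanism satisfying DD. Then for all probability distributions $G,G'$ on $\Theta$ with $G'\succeq_{\rm fosd}G$ (i.e. $G'(\theta)\le G(\theta)$ for all $\theta$), $\mathrm{RS}_\alpha(M,G)\ge\mathrm{RS}_\alpha(M,G')$.
   Context: Setting. Let $\Theta=[\underline\theta,\overline\theta]$ with $0<\underline\theta<\overline\theta$. Let $c>0$ and let $P:\mathbb R_+\to\mathbb R_+$ be continuous and strictly decreasing with $P(\overline q)=0$ for some $\overline q>0$. Put $V(q)=\int_0^q P(z)\,dz$ and $\mathrm{TS}(\theta,q)=V(q)-c-\theta q$ for $q>0$, $\mathrm{TS}(\theta,0)=0$. Assume (A2): $\mathrm{TS}(\overline\theta,P^{-1}(\overline\theta))>0$. A mechanism is a triple $M=(r,q,u)$ of functions $r:\Theta\to[0,1]$, $q:\Theta\to[0,\overline q]$, $u:\Theta\to\mathbb R$ with $q(\theta)=0$ if and only if $r(\theta)=0$. It is IC if $u(\theta)\ge u(\theta')+(\theta'-\theta)q(\theta')r(\theta')$ for all $\theta,\theta'\in\Theta$, and IR if $u(\theta)\ge 0$ for all $\theta$. (Known fact: $M$ is IC iff $\theta\mapsto q(\theta)r(\theta)$ is nonincreasing and $u(\theta)=u(\overline\theta)+\int_\theta^{\overline\theta}q(z)r(z)\,dz$ for all $\theta$; an IC mechanism is IR iff $u(\overline\theta)\ge0$.) Fix $\alpha\in[0,1)$. The regulator's surplus at $\theta$ is $\mathrm{RS}_\alpha(\theta,M)=r(\theta)\,\mathrm{TS}(\theta,q(\theta))-(1-\alpha)u(\theta)$.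 For a probability distribution (CDF) $G$ on $\Theta$, $\mathrm{RS}_\alpha(M,G)=\int_\Theta \mathrm{RS}_\alpha(\theta,M)\,dG(\theta)$. The quantity floor $\hat q$ is the unique $q>0$ with $V(q)-qP(q)=c$. A mechanism $(r,q,u)$ is floor-randomized if it is IC, IR, $u(\overline\theta)=0$, and $\Theta$ can be partitioned into three pairwise disjoint (possibly empty) intervals $\Theta_1,\Theta_{01},\Theta_0$, with every element of $\Theta_0$ larger than every element of $\Theta_{01}$ and every element of $\Theta_{01}$ larger than every element of $\Theta_1$, such that: $q(\theta)\ge\hat q$ and $r(\theta)=1$ for $\theta\in\Theta_1$; $q(\theta)=\hat q$ and $r(\theta)\in(0,1)$ for $\theta\in\Theta_{01}$; $q(\theta)=r(\theta)=0$ for $\theta\in\Theta_0$. The efficient quantity is $q_e(\theta)=P^{-1}(\theta)$. A mechanism satisfies downward distortion (DD) if $q(\theta)\le q_e(\theta)$ for all $\theta$, with equality at $\theta=\underline\theta$. *)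

(* Defs.v *)
From HB Require Import structures.
From mathcomp Require Import all_boot all_order all_algebra.
From mathcomp Require Import all_classical all_reals all_analysis.
Set Implicit Arguments. Unset Strict Implicit. Unset Printing Implicit Defensive.
Import Order.TTheory GRing.Theory Num.Theory.
Import numFieldNormedType.Exports.
Local Open Scope classical_set_scope.
Local Open Scope ring_scope.

Section Model.
Variable R : realType.

Definition Vfun (P : R -> R) (q : R) : R :=
  Rintegral lebesgue_measure `[0, q] P.

Definition TS (P : R -> R) (c th q : R) : R :=
  if 0 < q then Vfun P q - c - th * q else 0.

(* efficient quantity q_e(theta) = P^{-1}(theta), the inverse of P on [0, qbar]
   (default value 0 if theta is not in the range of P on [0,qbar]) *)
Definition Pinv (P : R -> R) (qbar th : R) : R :=
  xget 0 [set q | 0 <= q <= qbar /\ P q = th].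

Definition is_mechanism (thl thh qbar : R) (r q u : R -> R) : Prop :=
  forall th, thl <= th <= thh ->
    [/\ 0 <= r th <= 1, 0 <= q th <= qbar & (q th = 0 <-> r th = 0)].

Definition IC (thl thh : R) (r q u : R -> R) : Prop :=
  forall th th', thl <= th <= thh -> thl <= th' <= thh ->
    u th >= u th' + (th' - th) * q th' * r th'.

Definition IR (thl thh : R) (u : R -> R) : Prop :=
  forall th, thl <= th <= thh -> 0 <= u th.

Definition floor_randomized (thl thh qhat : R) (r q u : R -> R) : Prop :=
  [/\ IC thl thh r q u, IR thl thh u, u thh = 0 &
    exists T1 T01 T0 : set R,
      [/\ [/\ is_interval T1, is_interval T01 & is_interval T0],
          T1 `|` T01 `|` T0 = [set` `[thl, thh]],
          [/\ T1 `&` T01 = set0, T1 `&` T0 = set0 & T01 `&` T0 = set0],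
          (forall x y, T0 x -> T01 y -> y < x) /\
          (forall x y, T01 x -> T1 y -> y < x) &
          [/\ (forall th, T1 th -> qhat <= q th /\ r th = 1),
              (forall th, T01 th -> q th = qhat /\ 0 < r th < 1) &
              (forall th, T0 th -> q th = 0 /\ r th = 0)]]].

Definition DD (P : R -> R) (qbar thl thh : R) (q : R -> R) : Prop :=
  (forall th, thl <= th <= thh -> q th <= Pinv P qbar th) /\
  q thl = Pinv P qbar thl.

Definition RSpt (P : R -> R) (c alpha : R) (r q u : R -> R) (th : R) : R :=
  r th * TS P c th (q th) - (1 - alpha) * u th.

Definition RSG (P : R -> R) (c alpha thl thh : R) (r q u : R -> R)
  (G : probability R R) : \bar R :=
  (\int[G]_(th in `[thl, thh]) (RSpt P c alpha r q u th)%:E)%E.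

Definition cdfG (G : probability R R) (x : R) : \bar R := G [set` `]-oo, x]].

End Model.

(* Main.v *)
Require Import Defs.
From HB Require Import structures.
From mathcomp Require Import all_boot all_order all_algebra.
From mathcomp Require Import all_classical all_reals all_analysis.
From mathcomp Require Import measurable_realfun.
From mathcomp Require Import ring lra.
Set Implicit Arguments. Unset Strict Implicit. Unset Printing Implicit Defensive.
Import Order.TTheory GRing.Theory Num.Theory.
Import numFieldNormedType.Exports.
Local Open Scope classical_set_scope.
Local Open Scope ring_scope.

Section RealPart.
Variable R : realType.
Variables (thl thh c qbar qhat : R) (P : R -> R) (r q u : R -> R).
Hypothesis HPcont : {within `[0, qbar], continuous P}.
Hypothesis HPdec : {in `[0, qbar] &, forall x y, x < y -> P y < P x}.


Lemma Pmono x y : 0 <= y -> y <= x -> x <= qbar -> P x <= P y.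
Proof.
move=> y0 yx xq; move: (yx); rewrite le_eqVlt => /orP[/eqP->//|ltyx].
apply/ltW/HPdec => //; rewrite in_itv /=; apply/andP; split => //.
- exact: (le_trans yx).
- exact: (le_trans y0).
Qed.

Lemma V_diff y x : 0 <= y -> y <= x -> x <= qbar ->
  P x * (x - y) <= Vfun P x - Vfun P y.
Proof.
move=> y0 yx xq; move: (yx); rewrite le_eqVlt => /orP[/eqP->|ltyx].
  by rewrite !subrr mulr0.
have sub : [set` `[0, x]] `<=` [set` `[0, qbar]].
  move=> z /=; rewrite !in_itv /= => /andP[z0 zx]; apply/andP; split => //.
  exact: le_trans xq.
have intx : lebesgue_measure.-integrable [set` `[0, x]] (EFin \o P).
  apply: (@continuous_compact_integrable R P [set` `[0, x]]).
    exact: segment_compact.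
  exact: continuous_subspaceW sub HPcont.
rewrite /Vfun (Rintegral_itvB intx); last 2 first.
  by rewrite bnd_simp.
  by rewrite bnd_simp.
have mI : measurable [set` `]y, x]] by [].
have intI : lebesgue_measure.-integrable [set` `]y, x]] (EFin \o P).
  apply: integrableS intx => //.
  move=> z /=; rewrite !in_itv /= => /andP[z0 zx]; apply/andP; split => //.
  exact: le_trans (ltW z0).
have intc : lebesgue_measure.-integrable [set` `]y, x]] (EFin \o (fun=> P x)).
  apply: measurable_bounded_integrable => //.
    by rewrite /= lebesgue_measure_itv /=; case: ifP => _; rewrite ?ltry.
  exact: bounded_cst.
apply: (@le_trans _ _ (\int[lebesgue_measure]_(z in `]y, x]) P x)).
  rewrite Rintegral_cst //= lebesgue_measure_itv /= lte_fin ltyx /=.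
  by [].
apply: le_Rintegral => // z /=; rewrite in_itv /= => /andP[yz zx].
apply: Pmono => //; first exact: le_trans (ltW yz).
Qed.

Hypothesis Hqhat : 0 < qhat <= qbar.
Hypothesis Hqhat_eq : Vfun P qhat - qhat * P qhat = c.
Hypothesis HM : is_mechanism thl thh qbar r q u.
Hypothesis HIC : IC thl thh r q u.
Hypothesis HDD : DD P qbar thl thh q.
Variables T1 T01 T0 : set R.
Hypothesis Hcov : T1 `|` T01 `|` T0 = [set` `[thl, thh]].
Hypothesis Hord1 : forall x y, T0 x -> T01 y -> y < x.
Hypothesis Hord2 : forall x y, T01 x -> T1 y -> y < x.
Hypothesis H1 : forall th, T1 th -> qhat <= q th /\ r th = 1.
Hypothesis H01 : forall th, T01 th -> q th = qhat /\ 0 < r th < 1.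
Hypothesis H0 : forall th, T0 th -> q th = 0 /\ r th = 0.

Lemma DDP s : thl <= s <= thh -> 0 < q s -> s <= P (q s).
Proof.
move=> hs qs0.
have [_ /andP[q0 qq] _] := HM hs.
have := HDD.1 s hs; rewrite /Pinv.
case: xgetP => [x _ Hx | _]; last first.
  by move=> h; have := lt_le_trans qs0 h; rewrite ltxx.
move: Hx => /= -[] /andP[x0 xq] Px qx; rewrite -{1}Px; by apply: Pmono.
Qed.

Lemma Vq_ge x : qhat <= x -> x <= qbar -> x * P x <= Vfun P x - c.
Proof.
move=> qx xq.
case/andP: Hqhat => q0 qq.
have h1 := V_diff (ltW q0) qx xq.
have h2 : P x <= P qhat by apply: Pmono => //; exact: ltW.
have h3 : 0 <= qhat * (P qhat - P x) by apply: mulr_ge0; [exact: ltW| rewrite subr_ge0].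
rewrite -Hqhat_eq; nra.
Qed.

Lemma TSE s x : 0 < x -> TS P c s x = Vfun P x - c - s * x.
Proof. by move=> x0; rewrite /TS x0. Qed.

Lemma TS0 s : TS P c s 0 = 0.
Proof. by rewrite /TS ltxx. Qed.

Lemma qr_mono s s' : thl <= s <= thh -> thl <= s' <= thh -> s <= s' ->
  q s' * r s' <= q s * r s.
Proof.
move=> hs hs' ss'; move: (ss'); rewrite le_eqVlt => /orP[/eqP->//|lt].
have A := HIC hs hs'; have B := HIC hs' hs.
move: A B; rewrite -!mulrA.
set X := q s' * r s'; set Y := q s * r s => A B.
nra.
Qed.

Lemma pieces x : thl <= x <= thh -> T1 x \/ T01 x \/ T0 x.
Proof.
move=> hx; have : [set` `[thl, thh]] x by rewrite /= in_itv /=.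
by rewrite -Hcov => -[[?|?]|?]; tauto.
Qed.

Lemma cases2 s s' : thl <= s -> s <= s' -> s' <= thh ->
  [\/ [/\ r s' = 0, q s' = 0 & (r s = 0 /\ q s = 0) \/ (qhat <= q s /\ 0 < r s <= 1)],
      [/\ q s' = qhat, 0 < r s' < 1 &
          (q s = qhat /\ 0 < r s < 1) \/ (qhat <= q s /\ r s = 1)] |
      [/\ r s' = 1, qhat <= q s', r s = 1 & qhat <= q s]].
Proof.
move=> ls ss' s'h.
have hs : thl <= s <= thh by rewrite ls (le_trans ss').
have hs' : thl <= s' <= thh by rewrite s'h (le_trans ls).
case/andP: Hqhat => q0 qq.
case: (pieces hs') => [T1s'|[T01s'|T0s']].
- have [qs' rs'] := H1 T1s'.
  case: (pieces hs) => [T1s|[T01s|T0s]].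
  + have [qs rs] := H1 T1s; by apply: Or33.
  + by have := Hord2 T01s T1s'; rewrite ltNge ss'.
  + have [qs rs] := H0 T0s; have := qr_mono hs hs' ss'.
    by rewrite qs rs' mulr1 mul0r => h; have := lt_le_trans q0 (le_trans qs' h); rewrite ltxx.
- have [qs' rs'] := H01 T01s'.
  case: (pieces hs) => [T1s|[T01s|T0s]].
  + have [qs rs] := H1 T1s; apply: Or32; split => //; by right.
  + have [qs rs] := H01 T01s; apply: Or32; split => //; by left.
  + by have := Hord1 T0s T01s'; rewrite ltNge ss'.
- have [qs' rs'] := H0 T0s'.
  case: (pieces hs) => [T1s|[T01s|T0s]].
  + have [qs rs] := H1 T1s; apply: Or31; split => //; right; by rewrite rs ltr01 lexx.
  + have [qs rs] := H01 T01s; apply: Or31; split => //; right.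
    case/andP: rs => r0 r1; by rewrite qs lexx r0 ltW.
  + have [qs rs] := H0 T0s; apply: Or31; split => //; by left.
Qed.

Definition phi s := r s * TS P c s (q s) - u s.

Lemma in_range s s' : thl <= s -> s <= s' -> s' <= thh ->
  (thl <= s <= thh) /\ (thl <= s' <= thh).
Proof.
move=> ls ss' s'h; split; apply/andP; split => //.
- exact: le_trans s'h.
- exact: le_trans ss'.
Qed.

Lemma q_mono s s' : thl <= s -> s <= s' -> s' <= thh -> q s' <= q s.
Proof.
move=> ls ss' s'h; have [hs hs'] := in_range ls ss' s'h.
have [_ /andP[q0 _] _] := HM hs.
case: (cases2 ls ss' s'h) => [[_ -> _]//|[-> _ [[-> _]//|[]//]]|[rs' _ rs _]].
by have := qr_mono hs hs' ss'; rewrite rs rs' !mulr1.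
Qed.

Lemma phi_step s s' : thl <= s -> s <= s' -> s' <= thh ->
  phi s' - phi s <= (s' - s) * (q s - q s').
Proof.
move=> ls ss' s'h; have [hs hs'] := in_range ls ss' s'h.
have IC1 := HIC hs' hs.
case/andP: Hqhat => q0 qq.
have [/andP[rs0 rs1] /andP[qs0 qsq] _] := HM hs.
have [/andP[rs0' rs1'] /andP[qs0' qsq'] _] := HM hs'.
have ss'0 : 0 <= s' - s by rewrite subr_ge0.
rewrite /phi.
case: (cases2 ls ss' s'h).
- move=> [rs' qs' [[rs qs]|[qs rs]]].
  + rewrite rs' qs' rs qs !mul0r; rewrite qs rs !mulr0 in IC1; lra.
  + have a0 : 0 < q s := lt_le_trans q0 qs.
    rewrite rs' qs' mul0r subr0 (TSE s a0).
    have hV := Vq_ge qs qsq.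
    have hD := DDP hs a0.
    have hT : 0 <= Vfun P (q s) - c - s * q s.
      have : 0 <= q s * (P (q s) - s) by apply: mulr_ge0 => //; rewrite subr_ge0.
      lra.
    have h1 : 0 <= r s * (Vfun P (q s) - c - s * q s) by exact: mulr_ge0.
    have h2 : 0 <= (s' - s) * q s * (1 - r s).
      by apply: mulr_ge0; [exact: mulr_ge0|rewrite subr_ge0; case/andP: rs].
    nra.
- move=> [qs' /andP[rp' rl1'] [[qs /andP[rp rl1]]|[qs rs]]].
  + have hD : s' <= P qhat by rewrite -qs'; apply: DDP => //; rewrite qs'.
    have hrr : r s' <= r s.
      have := qr_mono hs hs' ss'; rewrite qs qs' => h.
      by rewrite -(ler_pM2l q0).
    rewrite qs' qs !(TSE _ q0); rewrite qs in IC1.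
    rewrite -Hqhat_eq.
    have hT : 0 <= qhat * (P qhat - s') by apply: mulr_ge0; [exact: ltW|rewrite subr_ge0].
    have h1 : 0 <= (r s - r s') * (qhat * (P qhat - s')) by apply: mulr_ge0 => //; rewrite subr_ge0.
    nra.
  + have a0 : 0 < q s := lt_le_trans q0 qs.
    have hD : s' <= P qhat by rewrite -qs'; apply: DDP => //; rewrite qs'.
    have hDa := DDP hs a0.
    rewrite qs' rs !mul1r (TSE _ q0) (TSE _ a0); rewrite rs mulr1 in IC1.
    have hV := V_diff (ltW q0) qs qsq.
    have hT : 0 <= qhat * (P qhat - s') by apply: mulr_ge0; [exact: ltW|rewrite subr_ge0].
    have h1 : 0 <= (1 - r s') * (qhat * (P qhat - s')) by apply: mulr_ge0 => //; rewrite subr_ge0 ltW.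
    have h3 : 0 <= (P (q s) - s) * (q s - qhat) by apply: mulr_ge0; rewrite subr_ge0.
    have hc : Vfun P qhat - c = qhat * P qhat by rewrite -Hqhat_eq; ring.
    nra.
- move=> [rs' qs' rs qs].
  have a0 : 0 < q s := lt_le_trans q0 qs.
  have b0 : 0 < q s' := lt_le_trans q0 qs'.
  have hab := q_mono ls ss' s'h.
  have hDa := DDP hs a0.
  rewrite rs rs' !mul1r (TSE _ a0) (TSE _ b0); rewrite rs mulr1 in IC1.
  have hV := V_diff (ltW b0) hab qsq.
  have h3 : 0 <= (P (q s) - s) * (q s - q s') by apply: mulr_ge0; rewrite subr_ge0.
  nra.
Qed.

Lemma phi_tele h : 0 < h -> forall n : nat, forall s s', thl <= s -> s <= s' -> s' <= thh ->
  s' - s <= n%:R * h -> phi s' - phi s <= h * (q s - q s').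
Proof.
move=> h0; elim => [|n IH] s s' ls ss' s'h.
  rewrite mul0r => hs; have -> : s' = s by lra.
  by rewrite !subrr mulr0.
move=> hn; rewrite -natr1 mulrDl mul1r in hn.
have qd : 0 <= q s - q s' by rewrite subr_ge0; apply: q_mono.
case: (lerP (s' - s) h) => hsh.
  apply: le_trans (phi_step ls ss' s'h) _.
  by apply: ler_wpM2r.
have sm : s <= s + h by lra.
have ms' : s + h <= s' by lra.
have A := phi_step ls sm (le_trans ms' s'h).
have B := IH (s + h) s' (le_trans ls sm) ms' s'h ltac:(lra).
have e : s + h - s = h by ring.
rewrite e in A; lra.
Qed.

Lemma phi_mono s s' : thl <= s -> s <= s' -> s' <= thh -> phi s' <= phi s.
Proof.
move=> ls ss' s'h; have [hs hs'] := in_range ls ss' s'h.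
have [_ /andP[qs0 qsq] _] := HM hs; have [_ /andP[qs0' _] _] := HM hs'.
have qbar0 : 0 < qbar by case/andP: Hqhat => h1 h2; exact: lt_le_trans h2.
have key : forall h, 0 < h -> phi s' - phi s <= h * qbar.
  move=> h h0.
  have hlt := truncnS_gt ((s' - s) / h).
  rewrite ltr_pdivrMr // in hlt.
  apply: le_trans (phi_tele h0 ls ss' s'h (ltW hlt)) _.
  by apply: ler_wpM2l; [exact: ltW| lra].
rewrite -subr_le0; apply/negPn/negP; rewrite -ltNge => hpos.
set X := phi s' - phi s in hpos key.
have := key (X / (2 * qbar)) (divr_gt0 hpos (mulr_gt0 (ltr0Sn _ 1) qbar0)).
have -> : X / (2 * qbar) * qbar = X / 2.
  by field; rewrite gt_eqF.
lra.
Qed.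

Lemma RS_mono alpha s s' : 0 <= alpha -> thl <= s -> s <= s' -> s' <= thh ->
  RSpt P c alpha r q u s' <= RSpt P c alpha r q u s.
Proof.
move=> a0 ls ss' s'h; have [hs hs'] := in_range ls ss' s'h.
have [/andP[rs0' _] /andP[qs0' _] _] := HM hs'.
have hu : u s' <= u s.
  have := HIC hs hs'.
  have : 0 <= (s' - s) * q s' * r s' by apply: mulr_ge0 => //; apply: mulr_ge0 => //; rewrite subr_ge0.
  lra.
have := phi_mono ls ss' s'h; rewrite /phi /RSpt.
have : alpha * u s' <= alpha * u s by apply: ler_wpM2l.
lra.
Qed.
End RealPart.

Section Meas.
Variable R : realType.

Lemma down_le (G G' : probability R R) (S : set R) :
  measurable S -> (forall x y : R, y <= x -> S x -> S y) ->
  (forall x, (cdfG G' x <= cdfG G x)%E) -> (G' S <= G S)%E.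
Proof.
move=> mS dS hc.
case: (pselect (S = setT)) => [->|ST]; first by rewrite !probability_setT.
have /existsNP [x0 nx0] : ~ (forall x, S x).
  by move=> h; apply: ST; apply/seteqP; split => // x _; exact: h x.
have ub y : S y -> y < x0.
  by move=> Sy; rewrite ltNge; apply/negP => h; exact: nx0 (dS _ _ h Sy).
case: (pselect (exists y, S y)) => [[y0 Sy0]|nS]; last first.
  have -> : S = set0 by apply/seteqP; split => x // Sx; apply: nS; exists x.
  by rewrite measure0.
have hsup : has_sup S by split; [exists y0 | exists x0 => y Sy; exact: ltW (ub y Sy)].
set s := sup S.
case: (pselect (S s)) => Ss.
  have -> : S = [set` `]-oo, s]].
    apply/seteqP; split => x /=; rewrite in_itv /=.
    - by move=> Sx; exact: sup_upper_bound.
    - by move=> xs; exact: dS xs Ss.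
  exact: hc.
have SE : S = [set` `]-oo, s[].
  apply/seteqP; split => x /=; rewrite in_itv /=.
  - move=> Sx; rewrite lt_neqAle sup_upper_bound // andbT.
    by apply/eqP => xs; apply: Ss; rewrite -xs.
  - move=> xs; have sx : 0 < s - x by rewrite subr_gt0.
    have [e Se] := sup_adherent sx hsup.
    rewrite opprB addrCA subrr addr0 => xe.
    exact: dS (ltW xe) Se.
pose F n : set R := [set` `]-oo, s - (n.+1%:R)^-1]].
have mF n : measurable (F n) by exact: measurable_itv.
have FU : \bigcup_n F n = S.
  rewrite SE; apply/seteqP; split => x /=.
  - move=> [n _]; rewrite /F /= in_itv /= => h.
    apply: le_lt_trans h _; rewrite ltrBlDr ltrDl invr_gt0; exact: ltr0Sn.
  - rewrite in_itv /= => xs.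
    exists (Num.truncn ((s - x)^-1)) => //; rewrite /F /= in_itv /=.
    have h := truncnS_gt ((s - x)^-1).
    set N := (Num.truncn ((s - x)^-1)).+1%:R in h *.
    have N0 : 0 < N by exact: ltr0Sn.
    have sx0 : 0 < s - x by rewrite subr_gt0.
    rewrite -div1r ltr_pdivrMr // in h.
    rewrite lerBrDl -lerBrDr -div1r ler_pdivrMr //.
    by rewrite mulrC ltW.
have ndF : {homo F : n m / (n <= m)%N >-> (n <= m)%O}.
  move=> n m nm; apply/subsetPset => x; rewrite /F /= !in_itv /= => h; apply: le_trans h _.
  apply: lerB => //; rewrite lef_pV2 ?posrE ?ltr0Sn // ler_nat; exact: nm.
have mU : measurable (\bigcup_n F n) by rewrite FU.
have cG := nondecreasing_cvg_mu (mu := G) mF mU ndF.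
have cG' := nondecreasing_cvg_mu (mu := G') mF mU ndF.
rewrite -FU -(cvg_lim (@ereal_hausdorff R) cG) -(cvg_lim (@ereal_hausdorff R) cG').
apply: lee_lim; [exact: cvgP cG'|exact: cvgP cG|].
by apply: nearW => n; exact: hc.
Qed.

Lemma int_shift (a b : R) (f g : R -> R) (mu : probability R R) (mg : measurable_fun setT g) (K : R) :
  mu [set` `[a, b]] = 1%E ->
  (forall x, 0 <= g x <= K) ->
  (forall x, a <= x <= b -> f x = g x + f b) ->
  (\int[mu]_(x in `[a, b]) (f x)%:E =
   'E_mu[(mfun_Sub (mem_set mg) : {RV mu >-> R})] + (f b)%:E)%E.
Proof.
move=> hD gb hfg.
set D := [set` `[a, b]].
have mD : measurable D by exact: measurable_itv.
have -> : (\int[mu]_(x in D) (f x)%:E = \int[mu]_(x in D) (g x + f b)%:E)%E.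
  apply: eq_integral => x; rewrite inE /= => hx; rewrite hfg //.
have mgb : measurable_fun setT (fun x => (g x + f b)%:E).
  by apply/measurable_EFinP; apply: measurable_funD.
have dj : [disjoint D & ~` D] by rewrite /disj_set setICr.
have hU := integral_setU mu mD (measurableC mD) (measurable_funS measurableT (@subsetT _ _) mgb) dj.
have hC : mu (~` D) = 0%E by rewrite probability_setC // hD subee.
rewrite (@null_set_integral _ _ _ mu (~` D) _ (measurableC mD) (measurable_funS measurableT (@subsetT _ _) mgb) hC) adde0 setUv in hU.
rewrite -hU; under eq_integral do rewrite EFinD.
rewrite integralD //; last 2 first.
- apply: measurable_bounded_integrable => //.
  by apply: (le_lt_trans (probability_le1 _ _)) => //; exact: ltry.
  exists K; split; first exact: num_real.
  move=> M hM x _ /=; have /andP[g0 gK] := gb x.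
  by rewrite ger0_norm // (le_trans gK) // ltW.
- exact: finite_measure_integrable_cst.
rewrite expectation_def; congr (_ + _)%E.
rewrite integral_cst //.
rewrite -[RHS]mule1; congr (_ * _)%E; exact: probability_setT.
Qed.

Lemma fosd_int (a b : R) (f : R -> R) (G G' : probability R R) :
  a <= b -> G [set` `[a, b]] = 1%E -> G' [set` `[a, b]] = 1%E ->
  (forall x, (cdfG G' x <= cdfG G x)%E) ->
  (forall x y, a <= x -> x <= y -> y <= b -> f y <= f x) ->
  (\int[G']_(x in `[a, b]) (f x)%:E <= \int[G]_(x in `[a, b]) (f x)%:E)%E.
Proof.
move=> ab hG hG' hc fm.
pose cl x := Num.min (Num.max x a) b.
have clab x : a <= cl x <= b.
  rewrite /cl; apply/andP; split.
  - by rewrite le_min ab andbT le_max lexx orbT.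
  - by rewrite ge_min lexx orbT.
have clid x : a <= x <= b -> cl x = x.
  move=> /andP[ax xb]; rewrite /cl.
  have -> : Num.max x a = x by apply/eqP; rewrite eq_le ge_max lexx ax le_max lexx.
  by apply/eqP; rewrite eq_le ge_min lexx le_min lexx xb.
have clmono x y : x <= y -> cl x <= cl y.
  by move=> xy; rewrite /cl; apply: le_min2 => //; apply: le_max2.
pose g x := f (cl x) - f b.
have gmono : {homo g : x y /~ y <= x}.
  move=> x y xy; rewrite /g lerD2r.
  have /andP[h1 h2] := clab x; have /andP[h3 h4] := clab y.
  exact: fm (clmono _ _ xy) _.
have mg : measurable_fun setT g := nonincreasing_measurable measurableT gmono.
have gb x : 0 <= g x <= f a - f b.
  have /andP[h1 h2] := clab x.
  rewrite /g subr_ge0 lerD2r; apply/andP; split.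
  - exact: fm.
  - exact: fm.
have hfg x : a <= x <= b -> f x = g x + f b by move=> hx; rewrite /g clid // subrK.
rewrite (int_shift mg hG' gb hfg) (int_shift mg hG gb hfg).
rewrite leeD2r //.
rewrite !ge0_expectation_ccdf; try by move=> x /=; case/andP: (gb x).
apply: ge0_le_integral => //.
- exact: measurable_funS (ccdf_measurable _).
- exact: measurable_funS (ccdf_measurable _).
move=> t _; rewrite /ccdf /distribution /pushforward /=.
apply: down_le => //.
- by have := mg measurableT _ (measurable_itv `]t, +oo[); rewrite setTI.
- move=> x y yx /=; rewrite !in_itv /= !andbT => h.
  exact: lt_le_trans h (gmono _ _ yx).
Qed.
End Meas.

Theorem lemma2 (R : realType) (thl thh c qbar alpha qhat : R) (P : R -> R)
  (Hth : 0 < thl < thh) (Hc : 0 < c) (Hqbar : 0 < qbar)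
  (HPcont : {within `[0, qbar], continuous P})
  (HPdec : {in `[0, qbar] &, forall x y, x < y -> P y < P x})
  (HPqbar : P qbar = 0)
  (HA2 : 0 < TS P c thh (Pinv P qbar thh))
  (Halpha : 0 <= alpha < 1)
  (Hqhat : 0 < qhat <= qbar) (Hqhat_eq : Vfun P qhat - qhat * P qhat = c)
  (r q u : R -> R)
  (HM : is_mechanism thl thh qbar r q u)
  (HFR : floor_randomized thl thh qhat r q u)
  (HDD : DD P qbar thl thh q)
  (G G' : probability R R)
  (HG : G [set` `[thl, thh]] = 1%E) (HG' : G' [set` `[thl, thh]] = 1%E)
  (Hfosd : forall x : R, (cdfG G' x <= cdfG G x)%E) :
  (RSG P c alpha thl thh r q u G' <= RSG P c alpha thl thh r q u G)%E.
Proof.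
case/andP: Hth => thl0 thlh.
case/andP: Halpha => a0 a1.
case: HFR => HIC HIR Hu [T1 [T01 [T0 [_ Hcov _ [Hord1 Hord2] [H1 H01 H0]]]]].
rewrite /RSG.
apply: (fosd_int (f := RSpt P c alpha r q u)) => //.
- exact: ltW.
- move=> x y lx xy yh.
  exact: (RS_mono HPcont HPdec Hqhat Hqhat_eq HM HIC HDD Hcov Hord1 Hord2 H1 H01 H0 a0 lx xy yh).
Qed.
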